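(* Let $n\ge 2$, $\varepsilon\in(0,1)$, and let $K\in T^n$ satisfy $(1-\varepsilon)D_n\subseteq \operatorname{conv}K\subseteq (1+\varepsilon)D_n$. Then \[ (1-\varepsilon)D_n\subseteq K+2\sqrt{\varepsilon}\,D_n . \]
   Context: $D_n$ denotes the closed Euclidean unit ball in $\mathbb R^n$; $\operatorname{conv}$ denotes convex hull and $+$ the Minkowski sum. A nonempty compact set $K\subset\mathbb R^n$ is called star shaped if $x\in K$ implies that the segment $[0,x]\subseteq K$; $T^n$ denotes the family of star shaped sets in $\mathbb R^n$. *)

(* Defs.v *)
From mathcomp Require Import ssreflect ssrfun ssrbool eqtype ssrnat seq fintype bigop.
From Stdlib Require Import Reals.
Set Implicit Arguments.
Unset Strict Implicit.
Open Scope R_scope.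

Definition vec (n : nat) := 'I_n -> R.

Definition vadd n (x y : vec n) : vec n := fun i => x i + y i.
Definition vsub n (x y : vec n) : vec n := fun i => x i - y i.
Definition vscale n (t : R) (x : vec n) : vec n := fun i => t * x i.
Definition vzero n : vec n := fun _ => 0.

Definition vnorm n (x : vec n) : R := sqrt (\big[Rplus/0]_(i < n) (x i * x i)).

Definition vset n := vec n -> Prop.
Definition vsubset n (A B : vset n) : Prop := forall x, A x -> B x.

Definition unit_ball n : vset n := fun x => vnorm x <= 1.

Definition dilate n (t : R) (A : vset n) : vset n :=
  fun x => exists a, A a /\ x = vscale t a.

Definition minkowski n (A B : vset n) : vset n :=
  fun x => exists a b, A a /\ B b /\ x = vadd a b.

Definition conv n (A : vset n) : vset n :=
  fun x => exists (m : nat) (p : 'I_m -> vec n) (w : 'I_m -> R),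
    (forall j, A (p j)) /\ (forall j, 0 <= w j) /\
    \big[Rplus/0]_(j < m) w j = 1 /\
    (forall i, x i = \big[Rplus/0]_(j < m) (w j * p j i)).

Definition compact n (A : vset n) : Prop :=
  forall u : nat -> vec n, (forall k, A (u k)) ->
    exists (phi : nat -> nat) (l : vec n),
      (forall k, (phi k < phi (S k))%nat) /\ A l /\
      forall e, 0 < e -> exists N, forall k, (N <= k)%nat ->
        vnorm (vsub (u (phi k)) l) < e.

(* T^n : nonempty compact star shaped (w.r.t. the origin) sets *)
Definition star_shaped n (K : vset n) : Prop :=
  (exists x, K x) /\ compact K /\
  forall x, K x -> forall t, 0 <= t <= 1 -> K (vscale t x).

(* Main.v *)
Require Import Defs.
From HB Require Import structures.
From mathcomp Require Import ssreflect ssrfun ssrbool eqtype ssrnat seq fintype bigop.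
From Stdlib Require Import Reals Lra Psatz Classical FunctionalExtensionality.
Set Implicit Arguments.
Open Scope R_scope.

Lemma RplusA' : associative Rplus. Proof. move=> x y z; ring. Qed.
Lemma RplusC' : commutative Rplus. Proof. move=> x y; ring. Qed.
Lemma Rplus0' : left_id 0 Rplus. Proof. move=> x; ring. Qed.
HB.instance Definition _ := Monoid.isComLaw.Build R 0 Rplus RplusA' RplusC' Rplus0'.

Definition dot n (x y : vec n) := \big[Rplus/0]_(i < n) (x i * y i).

Lemma sum_scal m c (f : 'I_m -> R) :
  \big[Rplus/0]_(i < m) (c * f i) = c * \big[Rplus/0]_(i < m) f i.
Proof.
symmetry; apply: (big_morph (fun x => c * x)) => [x y|]; ring.
Qed.

Lemma sum_le m (f g : 'I_m -> R) : (forall i, f i <= g i) ->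
  \big[Rplus/0]_(i < m) f i <= \big[Rplus/0]_(i < m) g i.
Proof.
move=> H; apply: (big_ind2 (fun a b => a <= b)) => //; [lra| move=> *; lra].
Qed.

Lemma dot_ge0 n (x : vec n) : 0 <= dot x x.
Proof.
apply: (big_ind (fun v => 0 <= v)); [lra| move=> *; lra| move=> i _; nra].
Qed.

Lemma sum_lin3 m a b c (f g h : 'I_m -> R) :
  \big[Rplus/0]_(i < m) (a * f i + b * g i + c * h i) =
  a * \big[Rplus/0]_(i < m) f i + b * \big[Rplus/0]_(i < m) g i
  + c * \big[Rplus/0]_(i < m) h i.
Proof. by rewrite !big_split /= !sum_scal. Qed.

Lemma sum_nonpos_zero m (f : 'I_m -> R) : (forall i, f i <= 0) ->
  \big[Rplus/0]_(i < m) f i = 0 -> forall j, f j = 0.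
Proof.
move=> H Hs j.
have E : \big[Rplus/0]_(i<m) f i = f j + \big[Rplus/0]_(i<m | i != j) f i.
  by rewrite (bigD1 j).
rewrite E in Hs.
have : \big[Rplus/0]_(i < m | i != j) f i <= 0.
  apply: (big_ind (fun v => v <= 0)); [lra| move=> *; lra| move=> i _; apply H].
have := H j; lra.
Qed.

Lemma exists_ge m (w d : 'I_m -> R) c : (forall j, 0 <= w j) ->
  \big[Rplus/0]_(j < m) w j = 1 ->
  \big[Rplus/0]_(j < m) (w j * d j) = c -> exists j, c <= d j.
Proof.
move=> Hw H1 Hc.
apply: NNPP => Hn.
have Hlt : forall j, d j < c.
  move=> j; apply: Rnot_le_lt => Hj; apply: Hn; by exists j.
have Hs : \big[Rplus/0]_(j < m) (1 * (w j * d j) + (-c) * w j + 0 * w j) = 0.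
  rewrite sum_lin3 Hc H1; ring.
have Hz := sum_nonpos_zero (fun j => 1 * (w j * d j) + (-c) * w j + 0 * w j).
have Hw0 : forall j, w j = 0.
  move=> j.
  have := Hz (fun i => ltac:(have := Hw i; have := Hlt i; nra)) Hs j.
  have := Hlt j; move=> ? E.
  have E' : w j * (d j - c) = 0 by lra.
  case: (Rmult_integral _ _ E') => //; lra.
have : \big[Rplus/0]_(j < m) w j = 0 by apply: big1 => j _; apply Hw0.
lra.
Qed.
Lemma dot_scale n c (v : vec n) : dot (vscale c v) (vscale c v) = c * c * dot v v.
Proof.
rewrite /dot -sum_scal; apply: eq_bigr => i _; rewrite /vscale; ring.
Qed.

Lemma norm_le1 n (v : vec n) : vnorm v <= 1 -> dot v v <= 1.
Proof.
rewrite /vnorm -/(dot v v) => H.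
have := sqrt_sqrt _ (dot_ge0 v); have := sqrt_pos (dot v v); nra.
Qed.

Lemma finish n eps (K : vset n) (x k : vec n) : 0 < eps -> K k ->
  dot (vsub x k) (vsub x k) <= 4 * eps ->
  minkowski K (dilate (2 * sqrt eps) (@unit_ball n)) x.
Proof.
move=> He Hk Hd.
have Hse : 0 < sqrt eps by apply: sqrt_lt_R0.
have Hss : sqrt eps * sqrt eps = eps by apply: sqrt_sqrt; lra.
exists k, (vsub x k); split; [done|split].
- exists (vscale (/(2 * sqrt eps)) (vsub x k)); split.
  + rewrite /unit_ball /vnorm -/(dot _ _) dot_scale -sqrt_1.
    apply: sqrt_le_1_alt.
    have -> : / (2 * sqrt eps) * / (2 * sqrt eps) = / (4 * eps).
      have -> : 4 * eps = (2 * sqrt eps) * (2 * sqrt eps) by nra.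
      field; lra.
    apply (Rmult_le_reg_l (4 * eps)); first lra.
    rewrite -Rmult_assoc Rinv_r; lra.
  + apply: functional_extensionality => i; rewrite /vscale; field; lra.
- apply: functional_extensionality => i; rewrite /vadd /vsub; ring.
Qed.

Lemma conv_self n (K : vset n) p : K p -> conv K p.
Proof.
move=> Hp; exists 1%nat, (fun _ => p), (fun _ => 1); split; [done|split; [move=> _; lra|split]].
- by rewrite big_ord1.
- by move=> i; rewrite big_ord1; ring.
Qed.

Theorem mainTheorem4 (n : nat) (eps : R) (K : vset n) :
  (2 <= n)%nat -> 0 < eps < 1 -> star_shaped K ->
  vsubset (dilate (1 - eps) (@unit_ball n)) (conv K) ->
  vsubset (conv K) (dilate (1 + eps) (@unit_ball n)) ->
  vsubset (dilate (1 - eps) (@unit_ball n))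
         (minkowski K (dilate (2 * sqrt eps) (@unit_ball n))).
Proof.
move=> _ He [[x0 Hx0] [_ Hstar]] Hin Hout x [y [Hy ->]].
have HY := @norm_le1 _ y Hy.
have HY0 := dot_ge0 y.
case: (Rle_lt_or_eq_dec _ _ HY0) => HYp; last first.
  apply: (@finish _ _ _ _ (vscale 0 x0)); [lra| apply: Hstar; [done|lra]|].
  have -> : dot (vsub (vscale (1 - eps) y) (vscale 0 x0)) (vsub (vscale (1 - eps) y) (vscale 0 x0))
     = (1 - eps) * (1 - eps) * dot y y.
    rewrite /dot -sum_scal; apply: eq_bigr => i _; rewrite /vsub /vscale; ring.
  rewrite -HYp; lra.
set s := sqrt (dot y y).
have Hs0 : 0 < s by apply: sqrt_lt_R0.
have Hss : s * s = dot y y by apply: sqrt_sqrt.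
have Hs1 : s <= 1 by rewrite -sqrt_1; apply: sqrt_le_1_alt.
set u := vscale (/ s) y.
have HU : dot u u = 1.
  rewrite /u dot_scale -Hss; field; lra.
have Hu : unit_ball u by rewrite /unit_ball /vnorm -/(dot u u) HU sqrt_1; lra.
have [m [p [w [HpK [Hw [Hw1 Hc]]]]]] := Hin _ (ex_intro _ u (conj Hu erefl)).
have Hsum : \big[Rplus/0]_(j < m) (w j * dot (p j) u) = 1 - eps.
  transitivity (\big[Rplus/0]_(i < n) (vscale (1 - eps) u i * u i)); last first.
    rewrite -[RHS]Rmult_1_r -HU /dot -sum_scal; apply: eq_bigr => i _; rewrite /vscale; ring.
  transitivity (\big[Rplus/0]_(i < n) \big[Rplus/0]_(j < m) (w j * (p j i * u i))); last first.
    apply: eq_bigr => i _; rewrite Hc Rmult_comm -sum_scal; apply: eq_bigr => j _; ring.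
  rewrite exchange_big /=; apply: eq_bigr => j _; by rewrite /dot sum_scal.
have [j Hj] := @exists_ge _ w _ _ Hw Hw1 Hsum.
set d := dot (p j) u in Hj.
have [q [Hq Hpq]] := Hout _ (@conv_self _ K _ (HpK j)).
have HQ := @norm_le1 _ q Hq.
have HP : dot (p j) (p j) <= (1 + eps) * (1 + eps).
  rewrite Hpq dot_scale; have := dot_ge0 q; nra.
set r := (1 - eps) * s.
set t := r / d.
have Hd0 : 0 < d by lra.
have Htd : t * d = r by rewrite /t; field; lra.
have Ht0 : 0 <= t by rewrite /t /r; apply: Rmult_le_pos; [nra| apply: Rlt_le; apply: Rinv_0_lt_compat].
have Ht1 : t <= 1.
  apply (Rmult_le_reg_r d); first lra.
  rewrite Htd /r; nra.
apply: (@finish _ _ _ _ (vscale t (p j))); [lra| apply: Hstar; [apply: HpK| lra]|].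
have -> : dot (vsub (vscale (1 - eps) y) (vscale t (p j))) (vsub (vscale (1 - eps) y) (vscale t (p j)))
   = r * r * dot u u + (- 2 * r * t) * d + t * t * dot (p j) (p j).
  rewrite /d /dot -sum_lin3; apply: eq_bigr => i _; rewrite /vsub /vscale /u /vscale /r.
  field; lra.
rewrite HU -Htd.
have Hdd : (1 - eps) * (1 - eps) <= d * d by nra.
have Htt : t * t <= 1 by nra.
have : t * t * (dot (p j) (p j) - d * d) <= t * t * (4 * eps).
  apply: Rmult_le_compat_l; nra.
nra.
Qed.
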